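(* In $\mathbb R^2$ with coordinates $(a,b)$, let $T=1$, $U=[-1,1]$, $f\equiv0$, $v_u(a,b)=(u,-au)$, $\ell(a,b)=b$, and $\vartheta=\delta_0\otimes\eta$ with $\eta$ a probability measure on $\mathbb R$ with finite first moment. Let $I[u]=\int\ell\,d\mu_1[u]$. Then: (i) the constant control $\bar u\equiv0$ satisfies the maximum condition of the Pontryagin Maximum Principle, with dual state $\bar p_t(a,b)=-b$, and $I[\bar u]=\int b\,d\eta(b)$; (ii) the constant control $u\equiv1$ gives $\mu_t=[(a,b)\mapsto(a+t,\,b-at-t^2/2)]_\sharp\vartheta$ and $I[u]=\int b\,d\eta(b)-\tfrac12<I[\bar u]$, and $u\equiv1$ is a global minimizer of $I$ over $\mathcal U=L_\infty([0,1];[-1,1])$; (iii) every constant control $u\equiv c$ with $c\in[-1,1]\setminus\{0\}$ satisfies $I[u]<I[\bar u]$, so $\bar u$ is not optimal.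
   Context: For $u\in\mathcal U$, $\mu[u]$ is the distributional solution of $\partial_t\mu_t+\nabla\cdot(v_{u(t)}\mu_t)=0$, $\mu_0=\vartheta$, i.e. the push-forward of $\vartheta$ by the flow of $\dot a=u(t)$, $\dot b=-a\,u(t)$. The maximum condition for $\bar u$ means: for a.e. $t$, $\bar u(t)\in\arg\max_{w\in U}\int\nabla\bar p_t\cdot v_w\,d\bar\mu_t$, where $\bar p$ solves $\partial_t\bar p+\nabla\bar p\cdot v_{\bar u(t)}=0$, $\bar p_1=-\ell$. $\otimes$ denotes product measure and $\sharp$ push-forward. *)

(* Defs.v *)
From HB Require Import structures.
From mathcomp Require Import all_boot all_order all_algebra.
From mathcomp Require Import all_classical all_reals all_analysis.
Set Implicit Arguments. Unset Strict Implicit. Unset Printing Implicit Defensive.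
Import Order.TTheory GRing.Theory Num.Theory.
Import numFieldNormedType.Exports.
Local Open Scope classical_set_scope.
Local Open Scope ring_scope.

Section example.
Context {R : realType}.

Definition vfield (w : R) (x : R * R) : R * R := (w, - x.1 * w).

Definition ell (x : R * R) : R := x.2.

(* admissible controls: (representatives of) L_oo([0,1];[-1,1]) *)
Definition admissible (u : R -> R) : Prop :=
  measurable_fun (`[0%R, 1%R] : set R) u /\ forall t : R, 0 <= t <= 1 -> -1 <= u t <= 1.

(* Caratheodory (integral) form of the flow of  a' = u(t), b' = - a u(t) *)
Definition flowA (u : R -> R) (t a : R) : R :=
  a + Rintegral lebesgue_measure (`[0%R, t] : set R) u.

Definition flow (u : R -> R) (t : R) (x : R * R) : R * R :=
  (flowA u t x.1,
   x.2 - Rintegral lebesgue_measure (`[0%R, t] : set R) (fun s => flowA u s x.1 * u s)).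

Definition theta (eta : probability R R) : set (R * R) -> \bar R :=
  (\d_(0%R : R) \x eta)%E.

Definition mu_state (eta : probability R R) (u : R -> R) (t : R)
  : set (R * R) -> \bar R :=
  pushforward (theta eta) (flow u t).

Definition cost (eta : probability R R) (u : R -> R) : \bar R :=
  (\int[mu_state eta u 1]_x (ell x)%:E)%E.

Definition dual_state (u : R -> R) (p : R -> R * R -> R) : Prop :=
  (forall x, p 1 x = - ell x) /\
  forall t : R, 0 <= t <= 1 -> forall x : R * R,
    [/\ differentiable (p t) x,
        derivable (fun s => p s x) t 1 &
        derive1 (fun s => p s x) t + 'D_(vfield (u t) x) (p t) x = 0].

Definition ham (eta : probability R R) (u : R -> R) (p : R -> R * R -> R)
  (t w : R) : \bar R :=
  (\int[mu_state eta u t]_x ('D_(vfield w x) (p t) x)%:E)%E.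

Definition max_condition (eta : probability R R) (u : R -> R)
  (p : R -> R * R -> R) : Prop :=
  {ae lebesgue_measure, forall t : R, 0 <= t <= 1 ->
     -1 <= u t <= 1 /\
     forall w : R, -1 <= w <= 1 -> (ham eta u p t w <= ham eta u p t (u t))%E}.

End example.

(* Main.v *)
Require Import Defs.
From HB Require Import structures.
From mathcomp Require Import all_boot all_order all_algebra.
From mathcomp Require Import all_classical all_reals all_analysis.
From mathcomp Require Import ring lra measurable_realfun.
Import Order.TTheory GRing.Theory Num.Theory.
Import numFieldNormedType.Exports.
Local Open Scope classical_set_scope.
Local Open Scope ring_scope.
Section S1.
Context (R : realType).
Notation mu := (@lebesgue_measure R).

Lemma mu_itv (t : R) : 0 <= t -> fine (mu `[0, t]) = t.
Proof.
move=> t0; rewrite lebesgue_measure_itv/=; case: ifPn => [_|].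
  by rewrite oppr0 adde0.
by rewrite lte_fin -leNgt => h; apply/esym/eqP; rewrite eq_le h t0.
Qed.

Lemma int_cst (c t : R) : 0 <= t -> \int[mu]_(s in `[0, t]) c = c * t.
Proof. by move=> t0; rewrite Rintegral_cst// mu_itv. Qed.

Lemma cont_int (f : R -> R) (t : R) : continuous f ->
  mu.-integrable `[0, t] (EFin \o f).
Proof.
move=> cf; apply: continuous_compact_integrable; first exact: segment_compact.
by apply: continuous_subspaceT.
Qed.
Lemma int_id (t : R) : 0 <= t -> \int[mu]_(s in `[0, t]) s = t ^+ 2 / 2.
Proof.
rewrite le_eqVlt => /predU1P[<-|t0].
  by rewrite set_itv1 Rintegral_set1 expr0n/= mul0r.
pose F := fun x : R => x ^+ 2 / 2.
have dF : forall x, derivable F x 1 by [].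
have cF : continuous F.
  by move=> x; apply/differentiable_continuous; rewrite -derivable1_diffP.
rewrite /Rintegral (@continuous_FTC2 _ _ F)//=.
- by rewrite /F expr0n/= mul0r subr0.
- by apply: continuous_subspaceT => x; exact: cvg_id.
- split.
  + by move=> x _.
  + exact/cvg_at_right_filter/cF.
  + exact/cvg_at_left_filter/cF.
- move=> x _; rewrite /F derive1Mr ?exprn_derivable// exp_derive1 expr1.
  by rewrite -mulr_natl mulrC mulrA mulVf ?mul1r// pnatr_eq0.
Qed.

Lemma flowA_const (c t a : R) : 0 <= t -> flowA (fun _ => c) t a = a + c * t.
Proof. by move=> t0; rewrite /flowA int_cst. Qed.

Lemma flow_const (c t : R) (x : R * R) : 0 <= t ->
  flow (fun _ => c) t x =
  (x.1 + c * t, x.2 - (x.1 * c * t + c ^+ 2 * (t ^+ 2 / 2))).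
Proof.
move=> t0; rewrite /flow flowA_const//; congr (_, _ - _).
rewrite (_ : \int[mu]_(s in `[0, t]) _ = \int[mu]_(s in `[0, t]) (x.1 * c + c ^+ 2 * s)); last first.
  apply: eq_Rintegral.
  move=> s; rewrite inE/= in_itv/= => /andP[s0 _].
  by rewrite flowA_const//; ring.
transitivity (\int[mu]_(s in `[0, t]) (x.1 * c) + \int[mu]_(s in `[0, t]) (c ^+ 2 * s)).
  apply: RintegralD => //.
- by apply: cont_int => ?; exact: cvg_cst.
- by apply: cont_int => y; apply: cvgM; [exact: cvg_cst|exact: cvg_id].
rewrite int_cst// RintegralZl// ?int_id//.
by apply: cont_int => ?; exact: cvg_id.
Qed.

Lemma bdd_int (f : R -> R) (t : R) : 0 <= t -> measurable_fun `[0, t] f ->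
  (forall s, 0 <= s <= t -> `|f s| <= 1) -> mu.-integrable `[0, t] (EFin \o f).
Proof.
move=> t0 mf fb; apply: measurable_bounded_integrable => //.
  have := lebesgue_measure_itv `[0%R, t]; rewrite /= => ->.
  by case: ifPn => _; rewrite ?ltry.
exists 1; split => // M M1 x /= xA; apply: le_trans (ltW M1).
by apply: fb; move: xA; rewrite /= in_itv.
Qed.

Lemma sub01 (s : R) : 0 <= s <= 1 -> `[0, s] `<=` (`[0, 1] : set R).
Proof.
move=> /andP[_ s1] r /=; rewrite !in_itv/= => /andP[-> rs].
exact: le_trans rs s1.
Qed.

Lemma adm_flow (u : R -> R) : admissible u ->
  exists K : R, K <= 1 / 2 /\ forall x,
    flow u 1 x = (x.1 + \int[mu]_(s in `[0, 1]) u s,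
                  x.2 - x.1 * \int[mu]_(s in `[0, 1]) u s - K).
Proof.
move=> [mu_ ub].
have ub1 s : 0 <= s <= 1 -> `|u s| <= 1 by move=> /ub; rewrite ler_norml.
have iu : mu.-integrable `[0, 1] (EFin \o u) by apply: bdd_int.
have iuS s : 0 <= s <= 1 -> mu.-integrable `[0, s] (EFin \o u).
  by move=> hs; apply: integrableS iu => //; exact: sub01.
pose A s := \int[mu]_(r in `[0, s]) u r.
have Ab s : 0 <= s <= 1 -> `|A s| <= s.
  move=> hs; have s0 : 0 <= s by case/andP: hs.
  apply: le_trans (le_normr_Rintegral _ (iuS s hs)) _ => //.
  rewrite -[leRHS]mul1r -int_cst//.
  apply: le_Rintegral => //.
  - apply: bdd_int => //.
      apply: measurableT_comp => //; apply: measurable_funS mu_ => //.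
      exact: sub01.
    move=> r /andP[r0 rs]; rewrite normr_id; apply: ub1.
    by rewrite r0 (le_trans rs)//; case/andP: hs.
  - by apply: cont_int => ?; exact: cvg_cst.
  - move=> r; rewrite /= in_itv/= => /andP[r0 rs]; apply: ub1.
    by rewrite r0 (le_trans rs)//; case/andP: hs.
have cA : {within `[0, 1], continuous A}.
  exact: (parameterized_integral_continuous ler01 iu).
have mA : measurable_fun (`[0, 1] : set R) A.
  by apply: subspace_continuous_measurable_fun.
have iAu : mu.-integrable `[0, 1] (EFin \o (fun s => A s * u s)).
  apply: bdd_int => //; first exact: measurable_funM.
  move=> s hs; rewrite normrM -[1]mulr1 ler_pM// ?ub1//.
  by apply: le_trans (Ab s hs) _; case/andP: hs.
pose K := \int[mu]_(s in `[0, 1]) (A s * u s).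
exists K; split.
  rewrite (_ : 1 / 2 = 1 ^+ 2 / 2); last by rewrite expr1n.
  rewrite -int_id//.
  apply: le_Rintegral => //; first by apply: cont_int => ?; exact: cvg_id.
  move=> s; rewrite /= in_itv/= => hs.
  apply: le_trans (ler_norm _) _; rewrite normrM -[leRHS]mulr1 ler_pM//.
    exact: Ab.
  exact: ub1.
move=> x.
have ixu : mu.-integrable `[0, 1] (EFin \o (fun s => x.1 * u s)).
  rewrite (_ : EFin \o _ = (fun s => x.1%:E * (EFin \o u) s))%E.
    exact: integrableZl.
  by apply/funext => s; rewrite /= EFinM.
have hD : \int[mu]_(s in `[0, 1]) (x.1 * u s + A s * u s) =
  \int[mu]_(s in `[0, 1]) (x.1 * u s) + K.
  by apply: RintegralD.
rewrite /flow /flowA /=; congr (_, _).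
rewrite (_ : \int[mu]_(s in `[0, 1]) _ =
   \int[mu]_(s in `[0, 1]) (x.1 * u s + A s * u s)); last first.
  by apply: eq_Rintegral => s _; rewrite mulrDl.
rewrite hD RintegralZl//; ring.
Qed.

End S1.

Section S2.
Context (R : realType) (eta : probability R R).

Lemma theta_E (E : set (R * R)) : measurable E ->
  theta eta E = eta [set y | E (0%R, y)].
Proof.
move=> mE; rewrite /theta /product_measure1 integral_dirac//.
  rewrite diracT mul1e /= /xsection; congr (eta _).
  by apply/seteqP; split => y /=; rewrite inE.
exact: (@measurable_fun_xsection _ _ R R R eta E mE).
Qed.

Local Open Scope ereal_scope.
Lemma int_push (F : R * R -> R * R) (mF : measurable_fun setT F)
  (h : R * R -> \bar R) (mh : measurable_fun setT h)
  (ih : eta.-integrable setT (fun y => h (F (0%R, y)))) :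
  \int[pushforward (theta eta) F]_x h x = \int[eta]_y h (F (0%R, y)).
Proof.
have mG : measurable_fun setT (fun y : R => F (0%R, y)).
  apply: measurableT_comp => //; apply: measurable_fun_pair => //.
rewrite (eq_measure_integral (pushforward eta (fun y => F (0%R, y)))).
    by rewrite integral_pushforward.
move=> A mA _.
have mFA : measurable (F @^-1` A).
  by rewrite -[X in measurable X]setTI; exact: mF.
change (theta eta (F @^-1` A) = eta ((fun y => F (0%R, y)) @^-1` A)).
by rewrite theta_E.
Qed.

Lemma cost_gen (eta_int : eta.-integrable setT (fun x : R => x%:E))
  (u : R -> R) (c K : R) :
  (forall x, flow u 1 x = (x.1 + c, x.2 - x.1 * c - K)%R) ->
  cost eta u = \int[eta]_x x%:E - K%:E.
Proof.
move=> fE; rewrite /cost /mu_state.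
have -> : flow u 1 = (fun x => (x.1 + c, x.2 - x.1 * c - K)%R).
  by apply/funext => x; rewrite fE.
rewrite int_push.
- rewrite /ell /=.
  under eq_integral do rewrite mul0r subr0 EFinB.
  rewrite integralB_EFin//; last exact: finite_measure_integrable_cst.
  rewrite EFinN; congr (_ - _).
  rewrite integral_cst// -[RHS]mule1; apply: congr1; exact: probability_setT.
- apply: measurable_fun_pair.
    by apply: measurable_funD => //; exact: measurable_fst.
  apply: measurable_funB => //; apply: measurable_funB; first exact: measurable_snd.
  by apply: measurable_funM => //; exact: measurable_fst.
- by apply/measurable_EFinP; exact: measurable_snd.
- rewrite /ell /=.
  under eq_fun do rewrite mul0r subr0 EFinB.
  apply: integrableB => //; exact: finite_measure_integrable_cst.
Qed.
End S2.

Section S3.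
Context (R : realType).

Definition nsnd (y : R * R) : R := - y.2.
Lemma nsnd_lin : linear_for *:%R nsnd.
Proof. by move=> a u v; rewrite /nsnd /=; ring. Qed.
HB.instance Definition _ := GRing.isLinear.Build R (R * R)%type R *:%R nsnd nsnd_lin.

Lemma nsnd_cont : continuous nsnd.
Proof. move=> y; apply: cvgN; exact: cvg_snd. Qed.

Lemma nsnd_diff (x : R * R) : differentiable nsnd x.
Proof. exact: linear_differentiable nsnd_cont. Qed.

Lemma D_nsnd (v x : R * R) : 'D_v nsnd x = - v.2.
Proof. rewrite deriveE ?nsnd_diff//. rewrite (diff_lin _ nsnd_cont); first reflexivity. exact: nsnd_diff. Qed.
End S3.

Section S4.
Context (R : realType) (eta : probability R R).
Notation mu := (@lebesgue_measure R).

Lemma flow0 (t : R) (x : R * R) : flow (fun _ => 0) t x = x.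
Proof.
rewrite /flow /flowA.
rewrite (_ : \int[mu]_(s in `[0, t]) (fun _ => 0) s = 0); last first.
  by rewrite Rintegral_cst// mul0r.
rewrite addr0 (_ : \int[mu]_(s in `[0, t]) _ = 0) ?subr0; first by case: x.
rewrite (_ : \int[mu]_(s in `[0, t]) _ = \int[mu]_(s in `[0, t]) (fun _ => 0) s).
  by rewrite Rintegral_cst// mul0r.
by apply: eq_Rintegral => s _; rewrite mulr0.
Qed.

Lemma cost_c (eta_int : eta.-integrable setT (fun x : R => x%:E)) (c : R) :
  cost eta (fun _ => c) = (\int[eta]_x x%:E - (c ^+ 2 / 2)%:E)%E.
Proof.
apply: (@cost_gen R eta eta_int _ c (c ^+ 2 / 2)) => x.
by rewrite flow_const//; congr (_, _); ring.
Qed.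

Lemma ham0 (t w : R) :
  ham eta (fun _ => 0) (fun (_ : R) (x : R * R) => - x.2) t w = 0%E.
Proof.
rewrite /ham.
rewrite (_ : (fun x : R * R => ('D_(vfield w x) (fun y : R * R => - y.2) x)%:E) =
   (fun x : R * R => (x.1 * w)%:E)); last first.
  apply/funext => x; rewrite (@D_nsnd R (vfield w x) x) /vfield /=.
  by rewrite mulNr opprK.
rewrite /mu_state (_ : flow (fun _ => 0) t = (fun x => x)); last first.
  by apply/funext => x; rewrite flow0.
rewrite int_push //=.
- under eq_integral do rewrite mul0r.
  by rewrite integral0.
- apply/measurable_EFinP; apply: measurable_funM => //; exact: measurable_fst.
- under eq_fun do rewrite mul0r; exact: finite_measure_integrable_cst.
Qed.
End S4.

Theorem mainTheorem4 (R : realType) (eta : probability R R)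
  (eta_int : eta.-integrable setT (fun x : R => x%:E)) :
  let ubar := fun _ : R => 0 : R in
  let pbar := fun (_ : R) (x : R * R) => - x.2 in
  let one := fun _ : R => 1 : R in
  (* (i) *)
  [/\ admissible ubar, dual_state ubar pbar, max_condition eta ubar pbar &
      cost eta ubar = (\int[eta]_x x%:E)%E] /\
  (* (ii) *)
  [/\ admissible one,
      (forall t : R, 0 <= t <= 1 ->
         mu_state eta one t =
         pushforward (theta eta)
           (fun x : R * R => (x.1 + t, x.2 - x.1 * t - t ^+ 2 / 2))),
      cost eta one = (\int[eta]_x x%:E - (1 / 2)%:E)%E,
      (cost eta one < cost eta ubar)%E &
      (forall u, admissible u -> (cost eta one <= cost eta u)%E)] /\
  (* (iii) *)
      (forall c : R, -1 <= c <= 1 -> c != 0 ->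
        (cost eta (fun _ => c) < cost eta ubar)%E).
Proof.
move=> ubar pbar one.
have fin : (\int[eta]_x x%:E)%E \is a fin_num by exact: integrable_fin_num.
set I := (\int[eta]_x x%:E)%E in fin *.
have [r Ir] : exists r : R, I = r%:E by exists (fine I); rewrite fineK.
have c0 : cost eta ubar = I.
  by rewrite /ubar cost_c// expr0n/= mul0r sube0.
have c1 : cost eta one = (I - (1 / 2)%:E)%E.
  by rewrite /one cost_c// expr1n.
split; [|split].
- split.
  + split; first exact: measurable_cst.
    by move=> t _; rewrite /ubar; apply/andP; split; lra.
  + split; first by [].
    move=> t _ x; split.
    * exact: (@nsnd_diff R x).
    * exact: derivable_cst.
    * rewrite (_ : derive1 (fun s => pbar s x) t = 0); last exact: derive1_cst.
      rewrite add0r (@D_nsnd R (vfield (ubar t) x) x) /vfield /ubar /=.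
      by rewrite mulr0 oppr0.
  + apply: aeW => t _; split; first by rewrite /ubar; apply/andP; split; lra.
    by move=> w _; rewrite /pbar /ubar !ham0.
  + exact: c0.
- split.
  + split; first exact: measurable_cst.
    by move=> t _; rewrite /one; apply/andP; split; lra.
  + move=> t /andP[t0 _]; rewrite /mu_state; congr (pushforward _ _).
    by apply/funext => x; rewrite flow_const//; congr (_, _); ring.
  + exact: c1.
  + by rewrite c1 c0 Ir -EFinB lte_fin; lra.
  + move=> u adm; have [K [K12 fE]] := @adm_flow R u adm.
    rewrite c1 (@cost_gen R eta eta_int _ _ _ fE) -/I Ir -!EFinB lee_fin; lra.
- move=> c _ cn0; rewrite cost_c// -/I c0 Ir -EFinB lte_fin.
  have : 0 < c ^+ 2 by rewrite exprn_even_gt0.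
  lra.
Qed.
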